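(* For every constant $k>0$ there is a constant $K$ such that the following holds for all even $n$. Let $a$ be even with $0\le a<n/2$, and let $y\in\{0,1\}^n$ with $\min\{|y|_1,n-|y|_1\}=a$. Let $N\ge N_a:=K a^{5/2}n^2/(n-2a)^{3/2}$. Independently $N$ times, sample an offspring of $y$ by flipping exactly $n/2$ positions chosen uniformly at random (without repetition), and let $Y$ be the number of offspring $z$ with $|z|_1=n/2$. Then, if $a\ge 2$, $$\Pr\big(Y\ge N(p_a+p_{a-2})/2\big)\le\exp\!\big(-k(n-2a)^{1/2}\big),$$ and if $a\le n/2-2$, $$\Pr\big(Y\le N(p_a+p_{a+2})/2\big)\le\exp\!\big(-k(n-2a)^{1/2}\big).$$
   Context: For $x\in\{0,1\}^n$, $|x|_1=\sum_ix_i$. For even $b$ with $0\le b\le n/2$, $p_b:=\binom{n-b}{(n-b)/2}\binom{b}{b/2}\big/\binom{n}{n/2}$; this is the probability that flipping exactly $n/2$ uniformly random positions of a string $x$ with $\min\{|x|_1,n-|x|_1\}=b$ yields a string with exactly $n/2$ ones. *)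

(* Defs.v *)
From mathcomp Require Import all_boot.
From Stdlib Require Import Reals.

Set Implicit Arguments.
Unset Strict Implicit.
Unset Printing Implicit Defensive.

Definition weight (n : nat) (x : {ffun 'I_n -> bool}) : nat := #|[set i | x i]|.

Definition flip (n : nat) (x : {ffun 'I_n -> bool}) (S : {set 'I_n})
  : {ffun 'I_n -> bool} := [ffun i => addb (x i) (i \in S)].

(* An outcome of the experiment: N independent choices of a set of flipped
   positions. The sample space is the set of such choices where each chosen
   set has exactly n/2 elements, with the uniform distribution (= N
   independent uniform n/2-subsets). *)
Definition valid_sample (n N : nat) (f : {ffun 'I_N -> {set 'I_n}}) : bool :=
  [forall j, #|f j| == n %/ 2].

Definition Ycount (n N : nat) (y : {ffun 'I_n -> bool})
  (f : {ffun 'I_N -> {set 'I_n}}) : nat :=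
  #|[set j : 'I_N | weight (flip y (f j)) == n %/ 2]|.

Definition prob_event (n N : nat) (E : {ffun 'I_N -> {set 'I_n}} -> bool) : R :=
  Rdiv (INR #|[set f | valid_sample (n:=n) (N:=N) f && E f]|)
       (INR #|[set f | valid_sample (n:=n) (N:=N) f]|).

Definition Rleb (x y : R) : bool := if Rle_dec x y then true else false.

Definition p_succ (n b : nat) : R :=
  Rdiv (INR ('C(n - b, (n - b) %/ 2) * 'C(b, b %/ 2)))
       (INR 'C(n, n %/ 2)).

(* Main.v *)
Set Warnings "-notation-overridden,-ambiguous-paths,-spurious-ssr-injection".
From mathcomp Require Import all_boot all_order all_algebra.
From mathcomp Require Import Rstruct.
From mathcomp Require Import zify.
Require Import Defs.
From Stdlib Require Import Reals Lra Psatz Lia.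

Set Implicit Arguments.
Unset Strict Implicit.
Unset Printing Implicit Defensive.

Ltac pnia := rewrite ?expnS ?expn0 ?muln1; nia.

Definition cb (j : nat) : nat := 'C(j.*2, j).

Lemma cbS j : cb j.+1 * j.+1 = 2 * (j.*2.+1) * cb j.
Proof.
rewrite /cb.
have h1 : j.+1 * 'C(j.*2.+2, j.+1) = j.*2.+2 * 'C(j.*2.+1, j).
  by rewrite -mul_bin_diag.
have h2 : j.+1 * 'C(j.*2.+1, j) = j.*2.+1 * 'C(j.*2, j).
  have e : 'C(j.*2.+1, j) = 'C(j.*2.+1, j.+1).
    transitivity 'C(j.*2.+1, j.*2.+1 - j.+1).
      by congr ('C(_, _)); lia.
    by rewrite bin_sub //; lia.
  by rewrite e -mul_bin_diag.
apply/eqP; rewrite -(eqn_pmul2l (ltn0Sn j)); apply/eqP.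
rewrite doubleS.
have h3 : j.+1 * (j.+1 * 'C(j.*2.+2, j.+1)) = j.+1 * (j.*2.+2 * 'C(j.*2.+1, j)) by rewrite h1.
rewrite mulnCA h2 in h3.
rewrite (mulnC _ j.+1) h3 -doubleS; lia.
Qed.

Lemma cb_pos j : 0 < cb j.
Proof. by rewrite /cb bin_gt0 -addnn leq_addr. Qed.

Lemma cb_upper j : (3 * j + 1) * expn (cb j) 2 <= expn 16 j.
Proof.
elim: j => [|j IH]; first by rewrite /cb.
have e := cbS j.
move: (cb j.+1) (cb j) e IH => X c e IH.
have p : (3*j+4)*expn (2*j+1) 2 <= 4*expn (j+1) 2*(3*j+1) by clear; pnia.
have k1 : (3*j.+1+1) * expn (X * j.+1) 2 <= 16 * expn 16 j * expn j.+1 2.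
  rewrite e.
  have -> : (3 * j.+1 + 1) * expn (2 * j.*2.+1 * c) 2 = ((3*j+4)*expn (2*j+1) 2) * (4 * expn c 2) by clear; pnia.
  apply: (@leq_trans ((4*expn (j+1) 2*(3*j+1)) * (4 * expn c 2))).
    by apply: leq_mul.
  have -> : 4 * expn (j + 1) 2 * (3 * j + 1) * (4 * expn c 2) = 16 * expn j.+1 2 * ((3*j+1) * expn c 2) by clear; pnia.
  have -> : 16 * expn 16 j * expn j.+1 2 = 16 * expn j.+1 2 * expn 16 j by clear; pnia.
  by apply: leq_mul.
rewrite expnMn mulnA in k1.
rewrite [expn 16 _]expnS.
by rewrite leq_pmul2r ?expn_gt0 // in k1.
Qed.

Lemma cb_lower j : 0 < j -> expn 16 j <= 4 * j * expn (cb j) 2.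
Proof.
elim: j => [//|j IH _].
have e := cbS j.
case: j IH e => [|j] IH e.
  by rewrite /cb.
have IH' := IH isT.
move: (cb j.+2) (cb j.+1) e IH' => X c e IH'.
have k1 : 16 * expn 16 j.+1 * expn j.+2 2 <= (4*j.+2) * expn (X * j.+2) 2.
  rewrite e.
  apply: (@leq_trans ((16 * expn j.+2 2) * (4 * j.+1 * expn c 2))).
    rewrite [16 * expn 16 _ * _]mulnC mulnA [expn _ 2 * 16]mulnC.
    by apply: leq_mul.
  have -> : 16 * expn j.+2 2 * (4 * j.+1 * expn c 2) = (4 * j.+2 * j.+1) * (16 * j.+2 * expn c 2) by clear; pnia.
  have -> : 4 * j.+2 * expn (2 * (j.+1).*2.+1 * c) 2 = expn (2*j+3) 2 * (16 * j.+2 * expn c 2) by clear; pnia.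
  apply: leq_mul => //; clear; pnia.
rewrite expnMn mulnA in k1.
rewrite [expn 16 _]expnS.
by rewrite leq_pmul2r ?expn_gt0 // in k1.
Qed.

Lemma cb_ratio A B : cb B * cb A.+1 * (B.*2.+1) * A.+1 = cb B.+1 * cb A * B.+1 * (A.*2.+1).
Proof.
have e1 := cbS A; have e2 := cbS B.
move: (cb A) (cb A.+1) (cb B) (cb B.+1) e1 e2 => a a' b b' e1 e2.
have -> : b * a' * B.*2.+1 * A.+1 = (b * B.*2.+1) * (a' * A.+1) by clear; nia.
have -> : b' * a * B.+1 * A.*2.+1 = (b' * B.+1) * (a * A.*2.+1) by clear; nia.
rewrite e1 e2; clear; nia.
Qed.

Lemma cb_prod_lower A B : 0 < A -> 0 < B ->
  3 * expn (cb (A + B)) 2 <= 16 * A * (expn (cb A) 2 * expn (cb B) 2).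
Proof.
move=> hA hB.
have l1 := cb_lower hA; have l2 := cb_lower hB; have u := cb_upper (A + B).
move: (cb A) (cb B) (cb (A+B)) l1 l2 u => a b c l1 l2 u.
rewrite expnD in u.
have h : expn 16 A * expn 16 B <= (4 * A * expn a 2) * (4 * B * expn b 2) by apply: leq_mul.
have h2 : B * (3 * expn c 2) <= B * (16 * A * (expn a 2 * expn b 2)).
  apply: (@leq_trans ((3 * (A + B) + 1) * expn c 2)).
    rewrite mulnA; apply: leq_mul => //; lia.
  apply: (leq_trans u); apply: (leq_trans h); clear; nia.
by rewrite leq_pmul2l in h2.
Qed.

Lemma split_eqs (T : finType) (O A1 A2 : {set T}) :
  A1 \subset O -> A2 \subset ~: O ->
  (A1 :|: A2) :&: O = A1 /\ (A1 :|: A2) :\: O = A2.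
Proof.
move=> /subsetP s1 /subsetP s2; split; apply/setP => x; rewrite !inE;
move: (s1 x) (s2 x); rewrite !inE;
case: (x \in A1); case: (x \in A2); case: (x \in O) => //= h h';
by [case: (h isT) | case: (h' isT)].
Qed.

Lemma card_split (T : finType) (O : {set T}) i j :
  #|[set S : {set T} | (#|S :&: O| == i) && (#|S :\: O| == j)]| =
  'C(#|O|, i) * 'C(#|~: O|, j).
Proof.
set D1 := [set A : {set T} | A \subset O & #|A| == i].
set D2 := [set A : {set T} | A \subset ~: O & #|A| == j].
rewrite -(cards_draws O i) -(cards_draws (~: O) j) -cardsX.
rewrite -(@card_in_imset _ _ (fun X : {set T} * {set T} => X.1 :|: X.2) (setX D1 D2)).
  congr #|pred_of_set _|; apply/setP => S; rewrite inE; apply/idP/imsetP.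
    move=> /andP[/eqP h1 /eqP h2]; exists (S :&: O, S :\: O).
      rewrite !inE /= h1 h2 !eqxx subsetIr /= andbT.
      by rewrite setDE subsetIr.
    by rewrite /= setID.
  case=> [[A1 A2]]; rewrite !inE /= => /andP[/andP[s1 c1] /andP[s2 c2]] ->.
  by have [-> ->] := split_eqs s1 s2; rewrite c1 c2.
move=> [A1 A2] [B1 B2]; rewrite !inE /= => /andP[/andP[s1 _] /andP[s2 _]].
move=> /andP[/andP[t1 _] /andP[t2 _]] e.
have [a1 a2] := split_eqs s1 s2; have [b1 b2] := split_eqs t1 t2.
by congr pair; [rewrite -a1 e b1 | rewrite -a2 e b2].
Qed.

Definition Vset n : {set {set 'I_n}} := [set S : {set 'I_n} | #|S| == n %/ 2].
Definition Gset n (y : {ffun 'I_n -> bool}) : {set {set 'I_n}} :=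
  [set S : {set 'I_n} | (#|S| == n %/ 2) && (weight (flip y S) == n %/ 2)].

Lemma weight_le n (y : {ffun 'I_n -> bool}) : weight y <= n.
Proof. by apply: (leq_trans (max_card _)); rewrite card_ord. Qed.

Lemma weight_flip n (y : {ffun 'I_n -> bool}) S :
  weight (flip y S) = #|[set i | y i] :\: S| + #|S :\: [set i | y i]|.
Proof.
rewrite /weight.
have -> : [set i | flip y S i] = ([set i | y i] :\: S) :|: (S :\: [set i | y i]).
  by apply/setP => i; rewrite !inE ffunE; case: (y i); case: (i \in S).
rewrite cardsU.
have -> : ([set i | y i] :\: S) :&: (S :\: [set i | y i]) = set0.
  by apply/setP => i; rewrite !inE; case: (y i); case: (i \in S).
by rewrite cards0 subn0.
Qed.

Lemma card_Vset n : #|Vset n| = 'C(n, n %/ 2).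
Proof. by rewrite /Vset card_draws card_ord. Qed.

Lemma card_Gset n (y : {ffun 'I_n -> bool}) : ~~ odd n -> ~~ odd (weight y) ->
  #|Gset y| = 'C(weight y, weight y %/ 2) * 'C(n - weight y, (n - weight y) %/ 2).
Proof.
move=> en ew.
set O := [set i | y i].
have wO : #|O| = weight y by [].
have cO : #|~: O| = n - weight y by rewrite cardsCs card_ord setCK.
rewrite -wO -cO -card_split wO cO.
congr #|pred_of_set _|; apply/setP => S; rewrite !inE weight_flip.
have e1 := cardsID O S.
have e2 := cardsID S O.
rewrite setIC in e2.
have wle := weight_le y.
move: (#|S :&: O|) (#|S :\: O|) (#|O :\: S|) e1 e2 wle => i j k e1 e2 wle.
rewrite -e1; rewrite wO in e2.
have hn := odd_double_half n; have hw := odd_double_half (weight y).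
rewrite (negbTE en) (negbTE ew) /= add0n in hn hw.
apply/idP/idP => /andP[/eqP h1 /eqP h2]; apply/andP; split; apply/eqP; lia.
Qed.

Section MGF.
Import GRing.Theory.
Local Open Scope ring_scope.
Variables (n N : nat) (y : {ffun 'I_n -> bool}).

Lemma mgf_id (x : R) :
  \sum_(f : {ffun 'I_N -> {set 'I_n}} | valid_sample f) x ^+ Ycount y f =
  (#|Vset n :\: Gset y|%:R + #|Gset y|%:R * x) ^+ N.
Proof.
have := @bigA_distr_big R 0 1 *%R +%R 'I_N _ (mem (Vset n))
  (fun (j : 'I_N) S => if S \in Gset y then x else 1).
rewrite prodr_const card_ord => e.
transitivity (\sum_(f in ffun_on (mem (Vset n)))
                \prod_(i : 'I_N) (if f i \in Gset y then x else 1)).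
  apply: eq_big.
    move=> f; rewrite /valid_sample; apply/forallP/ffun_onP => h j.
      by have := h j; rewrite inE.
    by have := h j; rewrite inE.
  move=> f /forallP hv.
  rewrite -big_mkcond prodr_const /Ycount; congr (_ ^+ _).
  apply: eq_card => j; rewrite !inE.
  by rewrite unfold_in /= -[X in _ = X]/(f j \in Gset y) inE (eqP (hv j)) eqxx.
rewrite -e; congr (_ ^+ _).
rewrite (bigID (mem (Gset y))) /= addrC.
congr (_ + _).
  rewrite (eq_bigr (fun _ => 1)); last by move=> S /andP[_ /negbTE ->].
  rewrite sumr_const; congr (_ *+ _).
  by apply: eq_card => S; rewrite [RHS]inE andbC. 
rewrite (eq_bigr (fun _ => x)); last by move=> S /andP[_ ->].
rewrite sumr_const mulr_natl; congr (_ *+ _).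
apply: eq_card => S; rewrite [RHS]inE.
rewrite unfold_in /= !inE. by case: (_ == _).  
Qed.
End MGF.

Section RHelp.
Local Open Scope R_scope.
Lemma exp_mono x y : x <= y -> exp x <= exp y.
Proof.
move=> h; destruct (Rle_lt_or_eq_dec _ _ h) as [h1|h1].
  by left; apply: exp_increasing.
by rewrite h1; right.
Qed.

Lemma exp_ge1p x : 1 + x <= exp x.
Proof.
destruct (Req_dec x 0) as [h|h].
  by rewrite h exp_0; lra.
by left; apply: exp_ineq1.
Qed.
End RHelp.

Section Markov.
Import GRing.Theory Num.Theory Order.TTheory.
Local Open Scope ring_scope.
Variables (n N : nat) (y : {ffun 'I_n -> bool}).

Lemma markov_ring (E : pred {ffun 'I_N -> {set 'I_n}}) (s c : R) :
  (forall f, valid_sample f -> E f -> s * c <= s * (Ycount y f)%:R) ->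
  #|[set f | valid_sample f && E f]|%:R <=
     (#|Vset n :\: Gset y|%:R + #|Gset y|%:R * exp s) ^+ N * exp (- (s * c)).
Proof.
move=> hE.
rewrite -mgf_id mulr_suml (bigID E) /=.
apply: ler_wpDr.
  apply: sumr_ge0 => f _; apply: mulr_ge0; last by apply/RleP; left; apply: exp_pos.
  by apply: exprn_ge0; apply/RleP; left; apply: exp_pos.
rewrite -sumr_const.
rewrite [X in X <= _](eq_bigl (fun f => valid_sample f && E f)); last by move=> f; rewrite inE.
apply: ler_sum => f /andP[hv he].
rewrite expRX -mulr_natr expRD.
apply/RleP; have h0 := exp_0; rewrite R1E in h0; apply: Rle_trans (Req_le _ _ (esym h0)) _; apply: exp_mono.
have := hE f hv he => /RleP; rewrite -?RmultE -?RplusE -?RoppE; lra.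
Qed.

Lemma powE (x : R) k : pow x k = x ^+ k.
Proof. elim: k => [//|k IH]; by rewrite /= IH exprS. Qed.
End Markov.

Lemma INR_sub a b : (b <= a)%nat -> INR (a - b) = (INR a - INR b)%R.
Proof. by move=> h; rewrite minus_INR //; apply/leP. Qed.

Lemma INR_expn a k : INR (expn a k) = (INR a ^ k)%R.
Proof. elim: k => [//|k IH]; by rewrite expnS /= mult_INR IH. Qed.

Lemma Gsub n (y : {ffun 'I_n -> bool}) : Gset y \subset Vset n.
Proof. by apply/subsetP => S; rewrite !inE => /andP[]. Qed.

Lemma card_valid n N :
  #|[set f : {ffun 'I_N -> {set 'I_n}} | valid_sample f]| = expn #|Vset n| N.
Proof.
have := @card_ffun_on ('I_N) _ (mem (Vset n)); rewrite card_ord => <-.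
apply: eq_card => f.
rewrite inE /valid_sample; apply/forallP/ffun_onP => h j.
  by rewrite inE.
by have := h j; rewrite inE.
Qed.

Section ProbLe.
Local Open Scope R_scope.

Lemma prob_le n N (y : {ffun 'I_n -> bool}) (E : pred {ffun 'I_N -> {set 'I_n}}) (s c : R) :
  (forall f, valid_sample f -> E f -> s * c <= s * INR (Ycount y f)) ->
  prob_event (n:=n) (N:=N) (fun f => E f) <=
   (1 - INR #|Gset y| / INR #|Vset n| + INR #|Gset y| / INR #|Vset n| * exp s) ^ N * exp (- (s * c)).
Proof.
move=> hE.
have hm : (INR #|[set f | valid_sample f && E f]| <=
     (INR #|Vset n :\: Gset y| + INR #|Gset y| * exp s) ^ N * exp (- (s * c))).
  rewrite !INRE powE; apply/RleP; apply: markov_ring => f hv he.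
  by apply/RleP; rewrite -INRE; apply: hE.
have hV : (0 < #|Vset n|)%nat.
  by rewrite card_Vset bin_gt0 leq_div.
have hVR : 0 < INR #|Vset n| by apply: lt_0_INR; apply/ltP.
have hD : #|Vset n :\: Gset y| = (#|Vset n| - #|Gset y|)%nat.
  by rewrite cardsD (setIidPr (Gsub y)).
rewrite hD INR_sub in hm; last by apply: subset_leq_card; apply: Gsub.
rewrite /prob_event card_valid INR_expn.
set V := INR #|Vset n| in hm hVR *; set G := INR #|Gset y| in hm *.
have -> : 1 - G / V + G / V * exp s = (V - G + G * exp s) / V by field; lra.
rewrite /Rdiv Rpow_mult_distr pow_inv.
have hVN : 0 < V ^ N by apply: pow_lt.
apply: (Rmult_le_reg_r (V ^ N)) => //.
have e : forall a b : R, a * / V ^ N * b * V ^ N = a * b.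
  move=> a b; field; lra.
rewrite e.
have -> : INR #|[set f | valid_sample f && E f]| * / V ^ N * V ^ N =
    INR #|[set f | valid_sample f && E f]| by field; lra.
exact: hm.
Qed.
End ProbLe.

Section Analytic.
Local Open Scope R_scope.

Lemma exp_pow x N : exp x ^ N = exp (INR N * x).
Proof.
elim: N => [|N IH]; first by rewrite /= Rmult_0_l exp_0.
by rewrite -tech_pow_Rmult IH -exp_plus S_INR; congr exp; ring.
Qed.

Lemma pow_exp_bound z N : 0 <= 1 + z -> (1 + z) ^ N <= exp (INR N * z).
Proof.
move=> h; rewrite -exp_pow; apply: pow_incr; split => //.
by have := exp_ge1p z; lra.
Qed.

Lemma upper_core (p d : R) (N : nat) : 0 < p -> p <= 1 -> 0 <= d -> d <= 2 * p ->
  let s := d / (4 * p) in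
  (1 - p + p * exp s) ^ N * exp (- (s * (INR N * (p + d)))) <= exp (- (INR N * d ^ 2 / (8 * p))).
Proof.
move=> hp hp1 hd hd2 s.
have hs : s * (4 * p) = d by rewrite /s; field; lra.
have hs0 : 0 <= s by nra.
have hs1 : s <= 1 / 2 by nra.
have hes : exp s <= 1 + s + 2 * s ^ 2.
  have h1 := exp_ge1p (- s).
  rewrite exp_Ropp in h1.
  have hpos := exp_pos s.
  have h2 : exp s * (1 - s) <= 1.
    have h3 : (1 - s) <= / exp s by lra.
    have := Rmult_le_compat_l _ _ _ (Rlt_le _ _ hpos) h3.
    by rewrite Rinv_r; lra.
  have h4 : 1 <= (1 + s + 2 * s ^ 2) * (1 - s) by nra.
  nra.
have hN : 0 <= INR N by apply: pos_INR.
have hb : (1 - p + p * exp s) ^ N <= exp (INR N * (p * (s + 2 * s ^ 2))).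
  apply: Rle_trans (@pow_exp_bound (p * (s + 2 * s^2)) N _) ; last by nra.
  apply: pow_incr; split; first by have := exp_pos s; nra.
  nra.
apply: Rle_trans (Rmult_le_compat_r _ _ _ (Rlt_le _ _ (exp_pos _)) hb) _.
rewrite -exp_plus; apply: exp_mono.
have -> : INR N * (p * (s + 2 * s ^ 2)) + - (s * (INR N * (p + d))) = INR N * (s * (2 * p * s - d)) by ring.
have -> : 2 * p * s = d / 2 by rewrite /s; field; lra.
have -> : - (INR N * d ^ 2 / (8 * p)) = INR N * (s * (d / 2 - d)) by rewrite /s; field; lra.
by apply: Rle_refl.
Qed.

Lemma lower_core (p d : R) (N : nat) : 0 < p -> p <= 1 -> 0 <= d ->
  let s := d / (2 * p) in
  (1 - p + p * exp (- s)) ^ N * exp (- (- s * (INR N * (p - d)))) <= exp (- (INR N * d ^ 2 / (4 * p))).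
Proof.
move=> hp hp1 hd s.
have hs : s * (2 * p) = d by rewrite /s; field; lra.
have hs0 : 0 <= s by nra.
have hes : exp (- s) <= 1 - s + s ^ 2.
  have h1 := exp_ge1p s.
  rewrite exp_Ropp.
  have hpos := exp_pos s.
  apply: (Rmult_le_reg_l (exp s)) => //.
  rewrite Rinv_r; last by lra.
  have h5 : 0 <= 1 - s + s ^ 2 by nra.
  have := Rmult_le_compat_r _ _ _ h5 h1; nra.
have hN : 0 <= INR N by apply: pos_INR.
have hb : (1 - p + p * exp (- s)) ^ N <= exp (INR N * (p * (- s + s ^ 2))).
  apply: Rle_trans (@pow_exp_bound (p * (- s + s^2)) N _) ; last by nra.
  apply: pow_incr; split; first by have := exp_pos (- s); nra.
  nra.
apply: Rle_trans (Rmult_le_compat_r _ _ _ (Rlt_le _ _ (exp_pos _)) hb) _.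
rewrite -exp_plus; apply: exp_mono.
have -> : INR N * (p * (- s + s ^ 2)) + - (- s * (INR N * (p - d))) = INR N * (s * (p * s - d)) by ring.
have -> : p * s = d / 2 by rewrite /s; field; lra.
have -> : - (INR N * d ^ 2 / (4 * p)) = INR N * (s * (d / 2 - d)) by rewrite /s; field; lra.
by apply: Rle_refl.
Qed.

Lemma final_gen (k K N p n a m sa sm C e : R) :
  0 < k -> K = 512 * k -> 0 < a -> 0 < n -> 0 < m -> 0 <= sa -> 0 < sm ->
  sa * sa = a -> sm * sm = m -> 0 < p -> 3 / 8 <= p ^ 2 * a -> 0 < C -> 0 <= e ->
  m <= e * (C * n * a) ->
  K * (a ^ 2 * sa) * n ^ 2 / (m * sm) <= N ->
  256 * k * sm / C ^ 2 <= N * p * e ^ 2.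
Proof.
move=> hk hK ha hn hm hsa hsm esa esm hp hpa hC he hme hN.
have hsp : 1 / 2 <= sa * p.
  have : 1 / 4 <= (sa * p) ^ 2 by rewrite Rpow_mult_distr /= Rmult_1_r esa; nra.
  have : 0 <= sa * p by nra.
  nra.
have hCna : 0 < C * n * a by apply: Rmult_lt_0_compat => //; apply: Rmult_lt_0_compat.
set f := m / (C * n * a).
have hf0 : 0 <= f by rewrite /f; apply: Rmult_le_pos; [lra | apply: Rlt_le; apply: Rinv_0_lt_compat].
have hfe : f <= e.
  rewrite /f; apply: (Rmult_le_reg_r (C * n * a)) => //.
  by rewrite /Rdiv Rmult_assoc Rinv_l; lra.
have hf2 : f ^ 2 <= e ^ 2 by apply: pow_incr.
have hN0 : 0 <= N.
  apply: Rle_trans hN; apply: Rmult_le_pos.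
    apply: Rmult_le_pos; first by apply: Rmult_le_pos; [lra | apply: Rmult_le_pos => //; nra].
    nra.
  by apply: Rlt_le; apply: Rinv_0_lt_compat; apply: Rmult_lt_0_compat.
apply: Rle_trans (_ : K * (a ^ 2 * sa) * n ^ 2 / (m * sm) * p * f ^ 2 <= _).
  have -> : K * (a ^ 2 * sa) * n ^ 2 / (m * sm) * p * f ^ 2 = K * (sa * p) * sm / C ^ 2.
    rewrite /f -esm; field; repeat split; lra.
  rewrite hK /Rdiv; apply: Rmult_le_compat_r; first by left; apply: Rinv_0_lt_compat; nra.
  have h1 : 0 <= k * sm by nra.
  nra.
apply: Rmult_le_compat.
- apply: Rmult_le_pos; last by lra.
  apply: Rmult_le_pos; last by apply: Rlt_le; apply: Rinv_0_lt_compat; apply: Rmult_lt_0_compat.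
  rewrite hK; apply: Rmult_le_pos; first by apply: Rmult_le_pos; [lra | apply: Rmult_le_pos => //; nra].
  nra.
- nra.
- apply: Rmult_le_compat_r => //; lra.
- exact: hf2.
Qed.

End Analytic.

Lemma INR_mul a b : INR (a * b) = (INR a * INR b)%R.
Proof. exact: mult_INR. Qed.

Section CombReal.
Local Open Scope R_scope.

Lemma bin_half m : ~~ odd m -> 'C(m, m %/ 2) = cb (m %/ 2).
Proof.
move=> hm; rewrite /cb divn2.
have := odd_double_half m; rewrite (negbTE hm) add0n => e.
by rewrite -{1}e.
Qed.

Lemma even_half m : ~~ odd m -> m = (2 * (m %/ 2))%nat.
Proof.
move=> hm; have := odd_double_half m; rewrite (negbTE hm) add0n divn2 => e.
by rewrite -{1}e -mul2n.
Qed.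

Lemma p_succ_cb n b : ~~ odd n -> ~~ odd b -> (b <= n)%nat ->
  p_succ n b = INR (cb ((n - b) %/ 2) * cb (b %/ 2)) / INR (cb (n %/ 2)).
Proof.
move=> hn hb hbn; rewrite /p_succ !bin_half //.
by rewrite oddB // (negbTE hn) (negbTE hb).
Qed.

Lemma INR_cb_pos j : 0 < INR (cb j).
Proof. by apply: lt_0_INR; apply/ltP; apply: cb_pos. Qed.

Lemma p_ratio n b : ~~ odd n -> ~~ odd b -> (b + 2 <= n)%nat ->
  p_succ n (b + 2) * INR ((n - b - 1) * (b + 2)) = p_succ n b * INR ((n - b) * (b + 1)).
Proof.
move=> hn hb hbn.
have hb2 : ~~ odd (b + 2) by rewrite oddD (negbTE hb).
rewrite !p_succ_cb //; last by lia.
have hb' := even_half hb; have hn' := even_half hn.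
set A := (b %/ 2)%nat in hb' *; set B := ((n - b) %/ 2 - 1)%nat.
have e1 : ((n - (b + 2)) %/ 2)%nat = B by rewrite /B; lia.
have e2 : ((b + 2) %/ 2)%nat = A.+1 by rewrite /A; lia.
have e3 : ((n - b) %/ 2)%nat = B.+1 by rewrite /B; lia.
have f1 : (n - b - 1 = B.*2.+1)%nat by rewrite /B; lia.
have f2 : (n - b = B.+1 * 2)%nat by rewrite /B; lia.
have f3 : (b + 2 = A.+1 * 2)%nat by rewrite /A; lia.
have f4 : (b + 1 = A.*2.+1)%nat by rewrite /A; lia.
have e4 : ((n - b - 1) * (b + 2))%nat = ((B.*2.+1) * A.+1 * 2)%nat by rewrite f1 f3 mulnA.
have e5 : ((n - b) * (b + 1))%nat = (B.+1 * (A.*2.+1) * 2)%nat by rewrite f2 f4 mulnAC.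
rewrite e1 e2 e3 e4 e5.
have key : INR (cb B * cb A.+1 * (B.*2.+1 * A.+1 * 2)) = INR (cb B.+1 * cb A * (B.+1 * A.*2.+1 * 2)).
  congr INR; have := cb_ratio A B; clear; move: (cb A) (cb A.+1) (cb B) (cb B.+1) => x1 x2 x3 x4; nia.
rewrite !INR_mul in key.
have hc := INR_cb_pos (n %/ 2).
rewrite !INR_mul.
apply: (Rmult_eq_reg_r (INR (cb (n %/ 2)))); last by lra.
have ex : forall u v w z : R, u * v / INR (cb (n %/ 2)) * (w * z * 2) * INR (cb (n %/ 2)) = u * v * (w * z * 2).
  by move=> u v w z; field; lra.
rewrite !ex.
have h2 : INR 2 = 2 by rewrite /=; lra. rewrite h2 in key; lra.
Qed.

Lemma p_lower n a : ~~ odd n -> ~~ odd a -> (2 <= a)%nat -> (a.*2 < n)%nat ->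
  3 / 8 <= p_succ n a ^ 2 * INR a.
Proof.
move=> hn ha ha2 han.
rewrite p_succ_cb //; last by lia.
set A := (a %/ 2)%nat; set B := ((n - a) %/ 2)%nat.
have hA : (0 < A)%nat by rewrite /A; lia.
have hB : (0 < B)%nat by rewrite /B; lia.
have eh : (n %/ 2)%nat = (A + B)%nat by rewrite /A /B; lia.
have ea : a = (2 * A)%nat by rewrite /A; lia.
rewrite eh [in INR a]ea.
have key := cb_prod_lower hA hB.
have hk : INR (3 * expn (cb (A + B)) 2) <= INR (16 * A * (expn (cb A) 2 * expn (cb B) 2)).
  by apply: le_INR; apply/leP.
rewrite !INR_mul in hk *.
have i3 : INR 3 = 3 by rewrite /=; lra.
have i16 : INR 16 = 16 by rewrite /=; lra.
have i2 : INR 2 = 2 by rewrite /=; lra.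
rewrite i3 i16 in hk; rewrite i2.
have hc := INR_cb_pos (A + B).
move: (INR (cb A)) (INR (cb B)) (INR (cb (A + B))) (INR A) hk hc => x yv z t hk hc.
have -> : (yv * x / z) ^ 2 * (2 * t) = (2 * t * x * x * yv * yv) / (z * z) by field; lra.
apply: (Rmult_le_reg_r (z * z)); first by nra.
have -> : 2 * t * x * x * yv * yv / (z * z) * (z * z) = 2 * t * x * x * yv * yv by field; lra.
nra.
Qed.
End CombReal.

Lemma p_eq n (y : {ffun 'I_n -> bool}) a : ~~ odd n -> ~~ odd a ->
  minn (weight y) (n - weight y) = a ->
  (INR #|Gset y| / INR #|Vset n| = p_succ n a)%R.
Proof.
move=> hn ha hm.
have hw := weight_le y.
rewrite card_Vset /p_succ.
move: hm; rewrite /minn; case: ifP => h ea.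
  subst a; rewrite card_Gset // mulnC //.
have ew : weight y = n - a by lia.
have hw2 : ~~ odd (weight y) by rewrite ew oddB ?(negbTE hn) ?(negbTE ha) //; lia.
rewrite card_Gset // -ea.
have -> : n - (n - weight y) = weight y by lia.
by [].
Qed.

Lemma INR_add a b : INR (a + b) = (INR a + INR b)%R.
Proof. exact: plus_INR. Qed.

Lemma Rleb_true x y : Defs.Rleb x y -> (x <= y)%R.
Proof. by rewrite /Defs.Rleb; case: Rle_dec. Qed.

Theorem lemma16 :
  forall k : R, (0 < k)%R ->
  exists K : R,
  forall (n a : nat) (y : {ffun 'I_n -> bool}) (N : nat),
    ~~ odd n -> ~~ odd a -> a.*2 < n ->
    minn (weight y) (n - weight y) = a ->
    (1 <= N)%N ->
    (K * (INR a ^ 2 * sqrt (INR a)) * INR n ^ 2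
       / (INR (n - a.*2) * sqrt (INR (n - a.*2))) <= INR N)%R ->
    ((2 <= a)%N ->
      (prob_event (n:=n) (N:=N) (fun f =>
         Rleb (INR N * (p_succ n a + p_succ n (a - 2)) / 2)
              (INR (Ycount y f)))
       <= exp (- (k * sqrt (INR (n - a.*2)))))%R)
    /\
    ((a + 2 <= n %/ 2)%N ->
      (prob_event (n:=n) (N:=N) (fun f =>
         Rleb (INR (Ycount y f))
              (INR N * (p_succ n a + p_succ n (a + 2)) / 2))
       <= exp (- (k * sqrt (INR (n - a.*2)))))%R).
Proof.
move=> k hk; exists (512 * k)%R => n a y N hn ha ha2 hmin hN hK.
have hwle := weight_le y.
have han : (a <= n)%nat by lia.
have i1 : INR 1 = 1%R by [].
have i2 : INR 2 = 2%R by rewrite /=; lra.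
have em : INR (n - a.*2) = (INR n - 2 * INR a)%R.
  by rewrite INR_sub ?(ltnW ha2) // -mul2n INR_mul i2.
have hm0 : (0 < INR (n - a.*2))%R by apply: lt_0_INR; apply/ltP; lia.
have hn0 : (0 < INR n)%R by apply: lt_0_INR; apply/ltP; lia.
set m := INR (n - a.*2) in em hm0 hK *.
set sm := sqrt m in hK *.
have hsm : (0 < sm)%R by apply: sqrt_lt_R0.
have esm : (sm * sm = m)%R by apply: sqrt_sqrt; lra.
set nR := INR n in em hn0 hK *; set aR := INR a in em hK *.
have haR0 : (0 <= aR)%R by apply: pos_INR.
set sa := sqrt aR in hK *.
have hsa : (0 <= sa)%R by apply: sqrt_pos.
have esa : (sa * sa = aR)%R by apply: sqrt_sqrt.
pose p := (INR #|Gset y| / INR #|Vset n|)%R.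
have hp : p = p_succ n a by apply: p_eq.
have hV : (0 < INR #|Vset n|)%R.
  by apply: lt_0_INR; apply/ltP; rewrite card_Vset bin_gt0 leq_div.
have hGV : (INR #|Gset y| <= INR #|Vset n|)%R.
  by apply: le_INR; apply/leP; apply: subset_leq_card; apply: Gsub.
have hp0 : (0 <= p)%R.
  rewrite /p; apply: Rmult_le_pos; first by apply: pos_INR.
  by left; apply: Rinv_0_lt_compat.
have hp1 : (p <= 1)%R.
  rewrite /p; apply: (Rmult_le_reg_r (INR #|Vset n|)) => //.
  rewrite /Rdiv Rmult_assoc Rinv_l; lra.
split.
- move=> ha2'.
  have hlow := p_lower hn ha ha2' ha2.
  rewrite -hp -/aR in hlow.
  have hpos : (0 < p)%R.
    case: (Rle_lt_or_eq_dec 0 p hp0) => // h.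
    by rewrite -h /= in hlow; lra.
  have har : (2 <= aR)%R by rewrite /aR -i2; apply: le_INR; apply/leP.
  have hodd2 : ~~ odd (a - 2) by rewrite oddB // (negbTE ha).
  have hle : (a - 2 + 2 <= n)%nat by lia.
  have hr := p_ratio hn hodd2 hle.
  have ee : (a - 2 + 2)%nat = a by lia.
  rewrite ee in hr; clear ee.
  have ee : (n - (a - 2) - 1)%nat = (n - a + 1)%nat by lia.
  rewrite ee in hr; clear ee.
  have ee : (n - (a - 2))%nat = (n - a + 2)%nat by lia.
  rewrite ee in hr; clear ee.
  have ee : (a - 2 + 1)%nat = (a - 1)%nat by lia.
  rewrite ee in hr; clear ee.
  rewrite !INR_mul !INR_add !INR_sub // ?i1 ?i2 in hr; last by lia.
  rewrite -hp -/nR -/aR in hr.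
  rewrite -hp.
  set q := p_succ n (a - 2) in hr *.
  set Y := ((nR - aR + 2) * (aR - 1))%R in hr.
  have hY : (0 < Y)%R by rewrite /Y; nra.
  pose e := ((q - p) / p)%R.
  have heY : (e * Y = m + 2)%R.
    apply: (Rmult_eq_reg_l p); last by lra.
    have -> : (p * (e * Y) = q * Y - p * Y)%R by rewrite /e; field; lra.
    rewrite -hr /Y em; ring.
  have he0 : (0 <= e)%R by nra.
  have hYle : (Y <= nR * aR)%R by rewrite /Y; nra.
  have hem : (m <= e * (1 * nR * aR))%R by nra.
  have he4 : (e <= 4)%R.
    have : (m + 2 <= Y)%R by rewrite /Y em; nra.
    nra.
  pose d := ((q - p) / 2)%R.
  have hdpe : (d = p * e / 2)%R by rewrite /d /e; field; lra.
  have hd0 : (0 <= d)%R by rewrite hdpe; nra.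
  have hd2 : (d <= 2 * p)%R by rewrite hdpe; nra.
  set s := (d / (4 * p))%R.
  have hs0 : (0 <= s)%R.
    have : (s * (4 * p) = d)%R by rewrite /s; field; lra.
    nra.
  apply: Rle_trans (@prob_le n N y (fun f => Defs.Rleb (INR N * (p + q) / 2) (INR (Ycount y f))) s (INR N * (p + d)) _) _.
    move=> f _ /Rleb_true h; apply: Rmult_le_compat_l => //.
    have -> : (INR N * (p + d) = INR N * (p + q) / 2)%R by rewrite /d; field.
    exact: h.
  apply: Rle_trans (upper_core N hpos hp1 hd0 hd2) _.
  apply: exp_mono; apply: Ropp_le_contravar.
  have hf := final_gen hk (erefl _) (ltac:(lra) : (0 < aR)%R) hn0 hm0 hsa hsm esa esm hpos hlow Rlt_0_1 he0 hem hK.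
  have h1 : (256 * k * sm / 1 ^ 2 = 256 * k * sm)%R by field.
  rewrite h1 in hf.
  have -> : (INR N * d ^ 2 / (8 * p) = INR N * p * e ^ 2 / 32)%R by rewrite hdpe; field; lra.
  have : (0 < k * sm)%R by nra.
  lra.
- move=> ha3.
  have hn4 : (a.*2 + 4 <= n)%nat by lia.
  have hle : (a + 2 <= n)%nat by lia.
  have hr := p_ratio hn ha hle.
  have ia : INR (n - a) = (nR - aR)%R by rewrite INR_sub.
  have ia1 : INR (n - a - 1) = (nR - aR - 1)%R by rewrite INR_sub ?ia ?i1 //; lia.
  rewrite !INR_mul !INR_add ia ia1 i1 i2 in hr.
  rewrite -hp -/aR in hr; rewrite -hp.
  set q := p_succ n (a + 2) in hr *.
  have hm4 : (4 <= m)%R.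
    have : (INR (a.*2 + 4) <= INR n)%R by apply: le_INR; apply/leP.
    rewrite INR_add -mul2n INR_mul i2 em -/nR -/aR.
    have -> : INR 4 = 4%R by rewrite /=; lra.
    lra.
  case: (posnP a) => [a0|apos].
  +
    have hp1' : p = 1%R.
      rewrite hp a0 /p_succ subn0 bin0 muln1.
      have : (0 < INR 'C(n, n %/ 2))%R by apply: lt_0_INR; apply/ltP; rewrite bin_gt0 leq_div.
      move=> h; field; lra.
    have aR0 : aR = 0%R by rewrite /aR a0.
    rewrite aR0 hp1' in hr.
    have hq : (q * (2 * (nR - 1)) = nR)%R by lra.
    have hq1 : (q < 1)%R by nra.
    have hN1 : (1 <= INR N)%R by rewrite -i1; apply: le_INR; apply/leP.
    set c := (INR N * (p + q) / 2)%R.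
    have hgap : (0 < INR N - c)%R by rewrite /c hp1'; nra.
    set t := (k * sm / (INR N - c))%R.
    have ht : (t * (INR N - c) = k * sm)%R by rewrite /t; field; lra.
    have ht0 : (0 <= t)%R by nra.
    apply: Rle_trans (@prob_le n N y (fun f => Defs.Rleb (INR (Ycount y f)) c) (- t) c _) _.
      move=> f _ /Rleb_true h.
      have := Rmult_le_compat_l _ _ _ ht0 h; lra.
    rewrite -!/p hp1'.
    have -> : (1 - 1 + 1 * exp (- t))%R = exp (- t) by ring.
    rewrite exp_pow -exp_plus; apply: exp_mono.
    rewrite -ht; lra.
  +
    have ha2' : (2 <= a)%nat by have := even_half ha; lia.
    have hlow := p_lower hn ha ha2' ha2.
    rewrite -hp -/aR in hlow.
    have hpos : (0 < p)%R.
      case: (Rle_lt_or_eq_dec 0 p hp0) => // h.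
      by rewrite -h /= in hlow; lra.
    have har : (2 <= aR)%R by rewrite /aR -i2; apply: le_INR; apply/leP.
    set Y := ((nR - aR - 1) * (aR + 2))%R in hr.
    have hY : (0 < Y)%R by rewrite /Y; nra.
    pose e := ((p - q) / p)%R.
    have heY : (e * Y = m - 2)%R.
      apply: (Rmult_eq_reg_l p); last by lra.
      have -> : (p * (e * Y) = p * Y - q * Y)%R by rewrite /e; field; lra.
      rewrite hr /Y em; ring.
    have he0 : (0 <= e)%R by nra.
    have hY2 : (Y <= 2 * nR * aR)%R by rewrite /Y; nra.
    have hem : (m <= e * (4 * nR * aR))%R.
      have := Rmult_le_compat_l _ _ _ he0 hY2; lra.
    pose d := ((p - q) / 2)%R.
    have hdpe : (d = p * e / 2)%R by rewrite /d /e; field; lra.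
    have hd0 : (0 <= d)%R by rewrite hdpe; nra.
    set s := (d / (2 * p))%R.
    have hs0 : (0 <= s)%R.
      have : (s * (2 * p) = d)%R by rewrite /s; field; lra.
      nra.
    apply: Rle_trans (@prob_le n N y (fun f => Defs.Rleb (INR (Ycount y f)) (INR N * (p + q) / 2)) (- s) (INR N * (p - d)) _) _.
      move=> f _ /Rleb_true h.
      have -> : (INR N * (p - d) = INR N * (p + q) / 2)%R by rewrite /d; field.
      have := Rmult_le_compat_l _ _ _ hs0 h; lra.
    apply: Rle_trans (lower_core N hpos hp1 hd0) _.
    apply: exp_mono; apply: Ropp_le_contravar.
    have hC : (0 < 4)%R by lra.
    have hf := final_gen hk (erefl _) (ltac:(lra) : (0 < aR)%R) hn0 hm0 hsa hsm esa esm hpos hlow hC he0 hem hK.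
    have h1 : (256 * k * sm / 4 ^ 2 = 16 * k * sm)%R by field.
    rewrite h1 in hf.
    have -> : (INR N * d ^ 2 / (4 * p) = INR N * p * e ^ 2 / 16)%R by rewrite hdpe; field; lra.
    lra.
Qed.
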